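(* Let $X$ be a finite set, let $N$ be a rooted phylogenetic network on $X$, and let $\widetilde{N}$ be its normalisation. Then: (a) $\widetilde{N}$ has no shortcuts, i.e. no arc $(u,v)$ such that $\widetilde{N}$ also contains a directed path of length at least $2$ from $u$ to $v$; (b) $\widetilde{N}$ is a rooted phylogenetic network on $X$.
   Context: A rooted phylogenetic network on a finite set $X$ is a finite acyclic directed graph $N$ with a single vertex of in-degree $0$ (the root $\rho$), all other vertices being of one of three types: (1) in-degree $1$ and out-degree $0$ (the leaves, which form exactly the set $X$); (2) in-degree $1$ and out-degree at least $2$; (3) out-degree $1$ and in-degree at least $2$ (reticulate vertices). A vertex $v$ of $N$ is visible if there is a leaf $x\in X$ such that every directed path from $\rho$ to $x$ passes through $v$; the root and all leaves are visible. Let $V_{\rm vis}(N)$ be the set of visible vertices. Define the directed graph ${\rm Cov}(N)$ with vertex set $V_{\rm vis}(N)$ as follows: for each pair $u\neq v$ of visible vertices such that $N$ has a directed path from $u$ to $v$, put an arc $(u,v)$; then delete every arc $(u,v)$ for which there is also a directed path of length at least $2$ from $u$ to $v$ in this graph (so ${\rm Cov}(N)$ is the Hasse diagram of the reachability partial order on $V_{\rm vis}(N)$). A vertex is subdividing if its in-degree and out-degree are both $1$. The normalisation $\widetilde{N}$ of $N$ is the directed graph obtained from ${\rm Cov}(N)$ by suppressing every subdividing vertex (i.e. replacing each maximal path whose interior vertices are subdividing by a single arc between its endpoints). *)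

(* Defs.v *)
(* A finite digraph is a relation E : rel V on a finType V,
   restricted to a vertex set W : {set V}. *)
From mathcomp Require Import all_boot.
From mathcomp Require Import boolp.
Set Implicit Arguments. Unset Strict Implicit. Unset Printing Implicit Defensive.

Section Defs.
Variable V : finType.

Definition indeg (E : rel V) (v : V) : nat := #|[set u | E u v]|.
Definition outdeg (E : rel V) (v : V) : nat := #|[set w | E v w]|.

Definition network (W : {set V}) (E : rel V) (X : {set V}) (r : V) : Prop :=
  [/\ (forall u v, E u v -> (u \in W) && (v \in W)),
      (forall u v, E u v -> ~~ connect E v u),
      r \in W /\ indeg E r = 0,
      (forall v, v \in W -> v != r ->
         [\/ indeg E v = 1 /\ outdeg E v = 0,
             indeg E v = 1 /\ 2 <= outdeg E v
           | outdeg E v = 1 /\ 2 <= indeg E v]) &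
      (forall v, v \in X <->
         [/\ v \in W, v != r, indeg E v = 1 & outdeg E v = 0])].

(* directed paths from r given as r :: p *)
Definition visible (E : rel V) (X : {set V}) (r v : V) : Prop :=
  [\/ v = r, v \in X |
      exists2 x, x \in X &
        forall p : seq V, path E r p -> last r p = x -> v \in r :: p].

Definition reachV (E : rel V) (X : {set V}) (r : V) : rel V :=
  fun u v => [&& `[< visible E X r u >], `[< visible E X r v >],
                 u != v & connect E u v].

Definition Cov (E : rel V) (X : {set V}) (r : V) : rel V :=
  fun u v => reachV E X r u v &&
    ~~ [exists w, [exists w', [&& reachV E X r u w,
                                  connect (reachV E X r) w w' &
                                  reachV E X r w' v]]].

Definition subdividing (E : rel V) (X : {set V}) (r v : V) : bool :=
  (indeg (Cov E X r) v == 1) && (outdeg (Cov E X r) v == 1).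

Definition normW (E : rel V) (X : {set V}) (r : V) : {set V} :=
  [set v | `[< visible E X r v >] && ~~ subdividing E X r v].

Definition suppressed_path (E : rel V) (X : {set V}) (r u : V) (q : seq V) (v : V)
  : bool :=
  path (Cov E X r) u (rcons q v) && all (subdividing E X r) q.

Definition Ntil (E : rel V) (X : {set V}) (r : V) : rel V :=
  fun u v => [&& u \in normW E X r, v \in normW E X r &
    [exists w, Cov E X r u w &&
       connect (fun x y => subdividing E X r x && Cov E X r x y) w v]].

Definition no_shortcuts (E : rel V) : Prop :=
  forall u v, E u v ->
    ~~ [exists w, [exists w', [&& E u w, connect E w w' & E w' v]]].

End Defs.

(* Main.v *)
Require Import Defs.
From mathcomp Require Import all_boot boolp.
Set Implicit Arguments. Unset Strict Implicit. Unset Printing Implicit Defensive.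

Section Pf.
Variables (V : finType) (E : rel V) (X : {set V}) (r : V).
Hypothesis HN : network [set: V] E X r.

Local Notation R := (reachV E X r).
Local Notation Cv := (Cov E X r).
Local Notation sub := (subdividing E X r).
Local Notation S := (fun x y : V => subdividing E X r x && Cov E X r x y).
Local Notation vis v := (`[< visible E X r v >]).

Lemma acyc u v : E u v -> ~~ connect E v u.
Proof. by case: HN => _ H _ _ _; apply: H. Qed.

Lemma FS (Q : rel V) a b : connect Q a b -> a != b -> exists2 y, Q a y & connect Q y b.
Proof.
move/connectP=> [[|y p] /= Hp Hl]; first by rewrite Hl eqxx.
move=> _; move/andP: Hp => [Hy Hp]; exists y => //.
by apply/connectP; exists p.
Qed.

Lemma LS (Q : rel V) a b : connect Q a b -> a != b -> exists2 q, Q q b & connect Q a q.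
Proof.
move/connectP=> [p]; elim: p a => [|y p IH] a /=; first by move=> _ ->; rewrite eqxx.
move=> /andP[Hy Hp] Hl Hab.
case: (eqVneq y b) => [Eyb|Nyb].
  by exists a => //; rewrite -Eyb.
have [q Hq Hc] := IH y Hp Hl Nyb.
by exists q => //; apply: connect_trans (connect1 Hy) Hc.
Qed.

Lemma antisym a b : connect E a b -> connect E b a -> a = b.
Proof.
move=> Hab Hba; case: (eqVneq a b) => // Nab.
have [y Hy Hyb] := FS Hab Nab.
by move: (acyc Hy); rewrite (connect_trans Hyb Hba).
Qed.

Lemma card0_rel (Q : rel V) v w : #|[set w | Q v w]| = 0 -> Q v w = false.
Proof.
move/eqP; rewrite cards_eq0 => /eqP H.
by have := in_set0 w; rewrite -H inE.
Qed.

Lemma card0_rel' (Q : rel V) v w : #|[set w | Q w v]| = 0 -> Q w v = false.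
Proof.
move/eqP; rewrite cards_eq0 => /eqP H.
by have := in_set0 w; rewrite -H inE.
Qed.

Lemma card1_rel (Q : rel V) v : #|[set w | Q v w]| = 1 ->
  exists c, forall w, Q v w = (w == c).
Proof.
move/eqP/cards1P => [c Hc]; exists c => w.
by have := in_set1 w c; rewrite -Hc inE.
Qed.

Lemma card1_rel' (Q : rel V) v : #|[set w | Q w v]| = 1 ->
  exists c, forall w, Q w v = (w == c).
Proof.
move/eqP/cards1P => [c Hc]; exists c => w.
by have := in_set1 w c; rewrite -Hc inE.
Qed.

Lemma card_pos' (Q : rel V) v : 0 < #|[set w | Q w v]| -> exists w, Q w v.
Proof. by rewrite card_gt0 => /set0Pn [w]; rewrite inE; exists w. Qed.

Lemma par_ex v : v != r -> exists p, E p v.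
Proof.
case: HN => _ _ _ Ht _ Hv; apply: (@card_pos' E); change (0 < indeg E v).
by case: (Ht v (in_setT v) Hv) => [[-> _]|[-> _]|[_ H]] //; apply: ltnW.
Qed.

Lemma root_reach v : connect E r v.
Proof.
have [n Hn] := ubnP #|[set u | connect E u v]|.
elim: n v Hn => // n IH v Hn.
case: (eqVneq v r) => [->|Hv]; first exact: connect0.
have [p Hp] := par_ex Hv.
apply: connect_trans (IH p _) (connect1 Hp).
rewrite ltnS in Hn; apply: leq_trans _ Hn; apply: proper_card; apply/properP; split.
  by apply/subsetP => u; rewrite !inE => H; apply: connect_trans H (connect1 Hp).
by exists v; rewrite !inE ?connect0 //; apply: acyc.
Qed.

Lemma leaf_out x y : x \in X -> E x y = false.
Proof.
case: HN => _ _ _ _ HX; move/HX => [_ _ _ H].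
exact: card0_rel H.
Qed.

Lemma leaf_conn x y : x \in X -> connect E x y -> y = x.
Proof.
move=> Hx H; case: (eqVneq x y) => // N.
by have [z Hz _] := FS H N; rewrite leaf_out in Hz.
Qed.

Lemma root_in u : E u r = false.
Proof. by case: HN => _ _ [_ H] _ _; apply: card0_rel' H. Qed.

Lemma root_conn u : connect E u r -> u = r.
Proof.
move=> H; case: (eqVneq u r) => // N.
by have [q Hq _] := LS H N; rewrite root_in in Hq.
Qed.

Lemma leaf_nr x : x \in X -> x != r.
Proof. by case: HN => _ _ _ _ HX; move/HX => [_ ]. Qed.

Lemma RP a b : R a b -> [/\ vis a, vis b, a != b & connect E a b].
Proof. by move/and4P. Qed.

Lemma RI a b : vis a -> vis b -> a != b -> connect E a b -> R a b.
Proof. by move=> *; apply/and4P. Qed.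

Lemma R_conn a b : R a b -> connect E a b.
Proof. by case/RP. Qed.

Lemma R_irr a : R a a = false.
Proof. by apply/negP => /RP [_ _]; rewrite eqxx. Qed.

Lemma R_trans a b c : R a b -> R b c -> R a c.
Proof.
move=> /RP [Ha Hb Nab Cab] /RP [_ Hc Nbc Cbc].
apply: RI => //; last exact: connect_trans Cab Cbc.
apply/negP => /eqP Eac; subst c.
by move: Nab; rewrite (antisym Cab Cbc) eqxx.
Qed.

Lemma conn_sub (Q : rel V) a b : (forall x y, Q x y -> R x y) ->
  connect Q a b -> a = b \/ R a b.
Proof.
move=> HQ /connectP [p]; elim: p a => [|y p IH] a /=; first by move=> _ ->; left.
move=> /andP [Hy Hp] Hl; right.
by case: (IH y Hp Hl) => [<-|H]; [apply: HQ | apply: R_trans (HQ _ _ Hy) H].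
Qed.

Lemma Cov_R a b : Cv a b -> R a b.
Proof. by case/andP. Qed.

Lemma Cov_short a b w : Cv a b -> R a w -> R w b -> False.
Proof.
move=> /andP [_ /negP H] H1 H2; apply: H.
by apply/existsP; exists w; apply/existsP; exists w; rewrite H1 H2 connect0.
Qed.

Lemma Cov_intro a b : R a b -> (forall w, R a w -> R w b -> False) -> Cv a b.
Proof.
move=> Hab H; apply/andP; split => //; apply/negP.
move/existsP=> [w /existsP [w' /and3P [H1 H2 H3]]].
case: (conn_sub (fun x y (h : R x y) => h) H2) => [E'|H4].
  by subst w'; apply: (H w).
by apply: (H w') => //; apply: R_trans H1 H4.
Qed.

Lemma Cov_vis a b : Cv a b -> vis a /\ vis b.
Proof. by move/Cov_R/RP => []. Qed.

Lemma S_R x y : S x y -> R x y.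
Proof. by move=> /andP [_ /Cov_R]. Qed.

Lemma Hasse u y : R u y -> exists2 d, Cv u d & (d = y \/ R d y).
Proof.
have [n Hn] := ubnP #|[set z | R z y]|.
elim: n y Hn => // n IH y Hn Huy.
case: (boolP (Cv u y)) => [H|H]; first by exists y => //; left.
have [w Huw Hwy] : exists2 w, R u w & R w y.
  move: H; rewrite /Cov Huy /= negbK => /existsP [w /existsP [w' /and3P [H1 H2 H3]]].
  exists w' => //.
  by case: (conn_sub (fun x y (h : R x y) => h) H2) => [<-|H4] //; apply: R_trans H1 H4.
have Hlt : #|[set z | R z w]| < n.
  rewrite ltnS in Hn; apply: leq_trans _ Hn; apply: proper_card; apply/properP; split.
    by apply/subsetP => z; rewrite !inE => H'; apply: R_trans H' Hwy.
  by exists w; rewrite !inE ?R_irr.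
have [d Hd Hdw] := IH w Hlt Huw.
exists d => //; right.
by case: Hdw => [->|H']; last apply: R_trans H' Hwy.
Qed.

Lemma Hasse_dual y u : R y u -> exists2 d, Cv d u & (d = y \/ R y d).
Proof.
have [n Hn] := ubnP #|[set z | R y z]|.
elim: n y Hn => // n IH y Hn Hyu.
case: (boolP (Cv y u)) => [H|H]; first by exists y => //; left.
have [w Hyw Hwu] : exists2 w, R y w & R w u.
  move: H; rewrite /Cov Hyu /= negbK => /existsP [w /existsP [w' /and3P [H1 H2 H3]]].
  exists w => //.
  by case: (conn_sub (fun x y (h : R x y) => h) H2) => [->|H4] //; apply: R_trans H4 H3.
have Hlt : #|[set z | R w z]| < n.
  rewrite ltnS in Hn; apply: leq_trans _ Hn; apply: proper_card; apply/properP; split.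
    by apply/subsetP => z; rewrite !inE => H'; apply: R_trans Hyw H'.
  by exists w; rewrite !inE ?R_irr.
have [d Hd Hdw] := IH w Hlt Hwu.
exists d => //; right.
by case: Hdw => [->|H']; last apply: R_trans Hyw H'.
Qed.


Definition wit c x := x \in X /\ forall p, path E r p -> last r p = x -> c \in r :: p.

Lemma mem_path_conn a p c : path E a p -> c \in a :: p -> connect E c (last a p).
Proof.
elim: p a => [|y p IH] a /=; first by move=> _; rewrite inE => /eqP ->; apply: connect0.
move=> /andP [Hay Hp]; rewrite inE => /orP [/eqP ->|Hc]; last exact: IH.
apply: connect_trans (connect1 Hay) _; apply: (path_connect Hp); exact: mem_last.
Qed.

Lemma vis_r : vis r.
Proof. by apply/asboolP; apply: Or31. Qed.

Lemma vis_leaf x : x \in X -> vis x.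
Proof. by move=> Hx; apply/asboolP; apply: Or32. Qed.

Lemma wit_vis c x : wit c x -> vis c.
Proof. by move=> [Hx H]; apply/asboolP; apply: Or33; exists x. Qed.

Lemma vis_wit c : vis c -> c != r -> exists x, wit c x.
Proof.
move/asboolP => [H|H|[x Hx H]]; first by rewrite H eqxx.
  by move=> _; exists c; split => // p _ <-; apply: mem_last.
by move=> _; exists x.
Qed.

Lemma wit_conn c x : wit c x -> connect E c x.
Proof.
move=> [_ H]; have /connectP [p Hp Hl] := root_reach x.
by rewrite Hl; apply: (mem_path_conn Hp); apply: (H _ Hp (esym Hl)).
Qed.

Lemma T c x w : wit c x -> connect E w x -> connect E w c \/ connect E c w.
Proof.
move=> [_ Hw] Hwx.
have /connectP [p1 Hp1 Hl1] := root_reach w.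
move/connectP: Hwx => [p2 Hp2 Hl2].
have : c \in r :: (p1 ++ p2).
  by apply: Hw; rewrite ?cat_path ?Hp1 -?Hl1 ?Hp2 // last_cat -Hl1 Hl2.
rewrite -cat_cons mem_cat => /orP [H|H].
  by right; rewrite Hl1; apply: mem_path_conn Hp1 H.
by left; apply: (path_connect Hp2); rewrite inE H orbT.
Qed.

Lemma par_in_path a s v : path E a s -> v \in a :: s -> v != a ->
  exists2 q, q \in a :: s & E q v.
Proof.
elim: s a => [|y s IH] a /=; first by move=> _; rewrite inE => /eqP ->; rewrite eqxx.
move=> /andP [Hay Hp]; rewrite inE => /orP [/eqP ->|Hv]; first by rewrite eqxx.
move=> Na; case: (eqVneq v y) => [->|Ny]; first by exists a; rewrite ?inE ?eqxx.
have [q Hq Hqv] := IH y Hp Hv Ny; exists q => //; by rewrite inE Hq orbT.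
Qed.

Lemma chi_in_path a s v : path E a s -> v \in a :: s -> v != last a s ->
  exists2 d, d \in s & E v d.
Proof.
elim: s a => [|y s IH] a /=; first by move=> _; rewrite inE => /eqP ->; rewrite eqxx.
move=> /andP [Hay Hp]; rewrite inE => /orP [/eqP ->|Hv] N.
  by exists y; rewrite ?inE ?eqxx.
have [d Hd Hvd] := IH y Hp Hv N; exists d => //; by rewrite inE Hd orbT.
Qed.

Lemma sub_par c : sub c -> exists p, Cv p c /\ forall u, Cv u c -> u = p.
Proof.
move/andP => [/eqP H _]; have [p Hp] := @card1_rel' Cv c H.
by exists p; split; [rewrite Hp | move=> u; rewrite Hp => /eqP].
Qed.

Lemma sub_chi c : sub c -> exists d, Cv c d /\ forall u, Cv c u -> u = d.
Proof.
move/andP => [_ /eqP H]; have [p Hp] := @card1_rel Cv c H.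
by exists p; split; [rewrite Hp | move=> u; rewrite Hp => /eqP].
Qed.

Lemma indeg_r0 : indeg Cv r = 0.
Proof.
apply/eqP; rewrite /indeg cards_eq0; apply/eqP/setP => u; rewrite !inE.
apply/negP => H; move: (Cov_R H); rewrite (root_conn (R_conn (Cov_R H))).
by rewrite R_irr.
Qed.

Lemma rnot_sub : ~~ sub r.
Proof. by rewrite /subdividing indeg_r0. Qed.

Lemma leaf_out0 x : x \in X -> outdeg Cv x = 0.
Proof.
move=> Hx; apply/eqP; rewrite /outdeg cards_eq0; apply/eqP/setP => u; rewrite !inE.
apply/negP => H; move: (Cov_R H); rewrite (leaf_conn Hx (R_conn (Cov_R H))).
by rewrite R_irr.
Qed.

Lemma leaf_nsub x : x \in X -> ~~ sub x.
Proof. by move=> Hx; rewrite /subdividing (leaf_out0 Hx) andbF. Qed.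

Lemma sub_wit c : sub c -> exists x, wit c x.
Proof.
move=> Hc; have [p [Hp _]] := sub_par Hc.
apply: vis_wit; first exact: (Cov_vis Hp).2.
by apply/negP => /eqP E'; move: Hc; rewrite E' (negbTE rnot_sub).
Qed.

Lemma sub_child_le y y' z : S y y' -> R y z -> y' = z \/ R y' z.
Proof.
move=> /andP [Hs Hyy'] Hyz; have [d Hd Hdz] := Hasse Hyz.
have [d' [_ Hu]] := sub_chi Hs.
by rewrite (Hu _ Hyy') -(Hu _ Hd).
Qed.

Lemma LB c v : sub c -> connect S c v -> exists x, wit c x /\ connect E v x.
Proof.
move=> Hc Hcv; have [x Hx] := sub_wit Hc; exists x; split => //.
have Hxl := Hx.1.
have Hcx : R c x.
  apply: RI; [exact: wit_vis Hx | exact: vis_leaf | | exact: wit_conn].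
  by apply/negP => /eqP E'; move: Hc; rewrite E' (negbTE (leaf_nsub Hxl)).
suff : v = x \/ R v x by case => [->|/R_conn //]; apply: connect0.
move/connectP: Hcv => [p Hp ->].
have Hinv : c = x \/ R c x by right. clear Hc Hx Hcx.
elim: p c Hinv Hp => [|y p IH] c Hc //= /andP [Hs Hp].
apply: IH Hp; case: Hc => [Ecx|Hcx'].
  by subst c; move: Hs; rewrite /= (negbTE (leaf_nsub Hxl)).
exact: (@sub_child_le c y x Hs Hcx').
Qed.

Lemma Sch a b : connect S a b -> a = b \/ (sub a /\ R a b).
Proof.
move=> H; case: (eqVneq a b) => [->|N]; [by left | right].
have [y /andP [Hs _] _] := FS H N; split => //.
by case: (conn_sub S_R H) => // E'; rewrite E' eqxx in N.
Qed.

Lemma U e w1 w2 v : Cv e w1 -> Cv e w2 -> connect S w1 v -> connect S w2 v -> w1 = w2.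
Proof.
move=> H1 H2 C1 C2.
case: (Sch C1) => [E1|[s1 R1]]; case: (Sch C2) => [E2|[s2 R2]].
- by rewrite E1 E2.
- by subst w1; case: (Cov_short H1 (Cov_R H2) R2).
- by subst w2; case: (Cov_short H2 (Cov_R H1) R1).
have [x1 [Hx1 Hvx1]] := LB s1 C1.
have V1 := (Cov_vis H1).2; have V2 := (Cov_vis H2).2.
case: (eqVneq w1 w2) => [//|N]; exfalso.
case: (T Hx1 (connect_trans (R_conn R2) Hvx1)) => H.
  apply: (Cov_short H1 (Cov_R H2)); apply: (RI V2 V1 _ H); by rewrite eq_sym.
by apply: (Cov_short H2 (Cov_R H1)); apply: (RI V1 V2 N H).
Qed.

Lemma B u c v w : Cv u c -> connect S c v -> vis w -> ~~ sub w -> R u w -> R w v -> False.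
Proof.
move=> Huc /connectP [p Hp ->] Hw Hns.
elim: p u c Huc Hp => [|y p IH] u c Huc /=; first by move=> _; apply: Cov_short Huc.
move=> /andP [Hs Hp] Huw Hwv; move: (Hs) => /andP [sc Ccy].
have Hcv : connect S c (last y p) by apply/connectP; exists (y :: p) => //=; rewrite Hs Hp.
have [x [Hx Hvx]] := LB sc Hcv.
have Hvc := (Cov_vis Huc).2.
case: (T Hx (connect_trans (R_conn Hwv) Hvx)) => H.
  case: (eqVneq w c) => [Ewc|N]; first by subst; rewrite sc in Hns.
  by apply: (Cov_short Huc Huw); apply: (RI Hw Hvc N H).
case: (eqVneq c w) => [Ewc|N]; first by subst; rewrite sc in Hns.
by apply: (IH c y Ccy Hp _ Hwv); apply: (RI Hvc Hw N H).
Qed.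

Lemma FW c : vis c -> exists e, [/\ vis e, ~~ sub e & connect S c e].
Proof.
have [n Hn] := ubnP #|[set z | R c z]|.
elim: n c Hn => // n IH c Hn Hc.
case: (boolP (sub c)) => Hs; last by exists c; split => //; apply: connect0.
have [c' [Hcc' _]] := sub_chi Hs.
have Hlt : #|[set z | R c' z]| < n.
  rewrite ltnS in Hn; apply: leq_trans _ Hn; apply: proper_card; apply/properP; split.
    by apply/subsetP => z; rewrite !inE => H'; apply: R_trans (Cov_R Hcc') H'.
  by exists c'; rewrite !inE ?R_irr ?Cov_R.
have [e [He1 He2 He3]] := IH c' Hlt (Cov_vis Hcc').2.
exists e; split => //; apply: connect_trans (connect1 _) He3; by rewrite /= Hs Hcc'.
Qed.

Lemma BK c : sub c -> exists e w, [/\ e \in normW E X r, Cv e w & connect S w c].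
Proof.
have [n Hn] := ubnP #|[set z | R z c]|.
elim: n c Hn => // n IH c Hn Hc.
have [p [Hpc _]] := sub_par Hc.
case: (boolP (sub p)) => Hp.
  have Hlt : #|[set z | R z p]| < n.
    rewrite ltnS in Hn; apply: leq_trans _ Hn; apply: proper_card; apply/properP; split.
      by apply/subsetP => z; rewrite !inE => H'; apply: R_trans H' (Cov_R Hpc).
    by exists p; rewrite !inE ?R_irr ?Cov_R.
  have [e [w [H1 H2 H3]]] := IH p Hlt Hp.
  exists e, w; split => //; apply: connect_trans H3 (connect1 _); by rewrite /= Hp Hpc.
exists p, c; split; [by rewrite inE (Cov_vis Hpc).1 Hp | exact: Hpc | exact: connect0].
Qed.


Lemma inW v : (v \in normW E X r) = vis v && ~~ sub v.
Proof. by rewrite inE. Qed.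

Lemma Ntil_elim u v : Ntil E X r u v ->
  [/\ u \in normW E X r, v \in normW E X r & exists2 w, Cv u w & connect S w v].
Proof. by move/and3P => [H1 H2 /existsP [w /andP [H3 H4]]]; split => //; exists w. Qed.

Lemma Ntil_intro u v w : u \in normW E X r -> v \in normW E X r -> Cv u w ->
  connect S w v -> Ntil E X r u v.
Proof. by move=> H1 H2 H3 H4; apply/and3P; split => //; apply/existsP; exists w; apply/andP. Qed.

Lemma Ntil_R u v : Ntil E X r u v -> R u v.
Proof.
case/Ntil_elim => _ _ [w H1 H2]; case: (conn_sub S_R H2) => [<-|H].
  exact: Cov_R H1.
exact: R_trans (Cov_R H1) H.
Qed.

Lemma nsub_conn a b : ~~ sub a -> connect S a b -> b = a.
Proof. by move=> Ha H; case: (Sch H) => [//|[Hs _]]; rewrite Hs in Ha. Qed.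

Lemma S_fun x y y' : S x y -> S x y' -> y = y'.
Proof.
move=> /andP [Hs H1] /andP [_ H2]; have [d [_ Hu]] := sub_chi Hs.
by rewrite (Hu _ H1) (Hu _ H2).
Qed.

Lemma FNconn a b b' : connect S a b -> connect S a b' -> connect S b b' \/ connect S b' b.
Proof.
move/connectP => [p Hp ->]; elim: p a Hp => [|y p IH] a /=; first by move=> _ H; left.
move=> /andP [Hy Hp] H.
case: (eqVneq a b') => [Eab|N].
  by right; rewrite -Eab; apply/connectP; exists (y :: p) => //=; rewrite Hy Hp.
have [y' Hy' Hc] := FS H N.
rewrite -(@S_fun a y y' Hy Hy') in Hc.
exact: (IH y Hp Hc).
Qed.

Lemma EP v : v \in normW E X r -> v != r -> exists e, Ntil E X r e v.
Proof.
move=> Hv Nr; move: (Hv); rewrite inW => /andP [Vv Nv].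
have Hrv : R r v by apply: (RI vis_r Vv _ (root_reach v)); rewrite eq_sym.
have [d Hd _] := Hasse_dual Hrv.
case: (boolP (sub d)) => Hs.
  have [e [w [H1 H2 H3]]] := BK Hs.
  exists e; apply: (Ntil_intro H1 Hv H2); apply: (connect_trans H3 (connect1 _)).
  by rewrite /= Hs Hd.
exists d; apply: (Ntil_intro _ Hv Hd (connect0 _ _)).
by rewrite inW (Cov_vis Hd).1 Hs.
Qed.

Lemma HalfP e1 w1 v e2 : Cv e1 w1 -> connect S w1 v -> sub w1 -> vis e2 ->
  ~~ sub e2 -> R e2 v -> R e2 w1.
Proof.
move=> H1 C1 s1 V2 N2 R2.
have [x1 [Hx1 Hvx1]] := LB s1 C1.
have Vw1 := (Cov_vis H1).2.
have Ne : e2 != w1 by apply/negP => /eqP E'; rewrite E' s1 in N2.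
case: (T Hx1 (connect_trans (R_conn R2) Hvx1)) => H; first exact: (RI V2 Vw1 Ne H).
exfalso; apply: (B H1 C1 V2 N2 _ R2).
apply: (R_trans (Cov_R H1)); apply: (RI Vw1 V2 _ H); by rewrite eq_sym.
Qed.

Lemma bothP e1 e2 w1 w2 v : e1 \in normW E X r -> e2 \in normW E X r ->
  Cv e1 w1 -> Cv e2 w2 -> connect S w1 v -> connect S w2 v -> sub w1 -> sub w2 ->
  R w1 v -> R w2 v -> e1 = e2.
Proof.
rewrite !inW => /andP [V1 N1] /andP [V2 N2] H1 H2 C1 C2 s1 s2 R1 R2.
have R2v := R_trans (Cov_R H2) R2; have R1v := R_trans (Cov_R H1) R1.
have A := HalfP H1 C1 s1 V2 N2 R2v.
have B' := HalfP H2 C2 s2 V1 N1 R1v.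
have Vw1 := (Cov_vis H1).2; have Vw2 := (Cov_vis H2).2.
suff Ew : w1 = w2.
  by subst w2; have [p [_ Hu]] := sub_par s1; rewrite (Hu _ H1) (Hu _ H2).
case: (eqVneq w1 w2) => [//|N]; exfalso.
have [x1 [Hx1 Hvx1]] := LB s1 C1.
case: (T Hx1 (connect_trans (R_conn R2) Hvx1)) => H.
  apply: (Cov_short H1 B'); apply: (RI Vw2 Vw1 _ H); by rewrite eq_sym.
by apply: (Cov_short H2 A); exact: (RI Vw1 Vw2 N H).
Qed.

Lemma UP v p e1 e2 : (forall u, Cv u v -> u = p) -> Ntil E X r e1 v ->
  Ntil E X r e2 v -> e1 = e2.
Proof.
move=> Hp /Ntil_elim [W1 Wv [w1 H1 C1]] /Ntil_elim [W2 _ [w2 H2 C2]].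
move: (W1) (W2); rewrite !inW => /andP [V1 N1] /andP [V2 N2].
case: (Sch C1) => [E1|[s1 R1]]; case: (Sch C2) => [E2|[s2 R2]].
- by subst w1 w2; rewrite (Hp _ H1) (Hp _ H2).
- subst w1; exfalso; have A := HalfP H2 C2 s2 V1 N1 (Cov_R H1).
  exact: (Cov_short H1 A R2).
- subst w2; exfalso; have A := HalfP H1 C1 s1 V2 N2 (Cov_R H2).
  exact: (Cov_short H2 A R1).
- exact: (bothP W1 W2 H1 H2 C1 C2 s1 s2 R1 R2).
Qed.

Lemma OUTU v c e1 e2 : (forall u, Cv v u -> u = c) -> Ntil E X r v e1 ->
  Ntil E X r v e2 -> e1 = e2.
Proof.
move=> Hc /Ntil_elim [_ W1 [w1 H1 C1]] /Ntil_elim [_ W2 [w2 H2 C2]].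
rewrite (Hc _ H1) in C1; rewrite (Hc _ H2) in C2.
move: W1 W2; rewrite !inW => /andP [_ N1] /andP [_ N2].
case: (FNconn C1 C2) => H; [exact: esym (nsub_conn N1 H) | exact: nsub_conn N2 H].
Qed.

Lemma OUT2 v c1 c2 : v \in normW E X r -> Cv v c1 -> Cv v c2 -> c1 != c2 ->
  1 < outdeg (Ntil E X r) v.
Proof.
move=> Wv H1 H2 N.
have [e1 [V1 N1 C1]] := FW (Cov_vis H1).2.
have [e2 [V2 N2 C2]] := FW (Cov_vis H2).2.
have T1 : Ntil E X r v e1 by apply: (Ntil_intro Wv _ H1 C1); rewrite inW V1 N1.
have T2 : Ntil E X r v e2 by apply: (Ntil_intro Wv _ H2 C2); rewrite inW V2 N2.
rewrite /outdeg; apply/card_gt1P; exists e1, e2; split; [by rewrite inE | by rewrite inE | ].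
apply/negP => /eqP E12; subst e2.
by rewrite (U H1 H2 C1 C2) eqxx in N.
Qed.

Lemma PE v p : v \in normW E X r -> Cv p v -> exists e, Ntil E X r e v /\
  ((e = p /\ ~~ sub p) \/ (sub p /\ exists2 w, Cv e w & connect S w p)).
Proof.
move=> Wv Hp; case: (boolP (sub p)) => Hs.
  have [e [w [H1 H2 H3]]] := BK Hs.
  exists e; split; last by right; split => //; exists w.
  apply: (Ntil_intro H1 Wv H2); apply: (connect_trans H3 (connect1 _)); by rewrite /= Hs Hp.
exists p; split; last by left.
apply: (Ntil_intro _ Wv Hp (connect0 _ _)); by rewrite inW (Cov_vis Hp).1 Hs.
Qed.

Lemma chain_end a b v : connect S a b -> S a v -> Cv b v -> ~~ sub v -> a = b.
Proof.
move=> H Sav Hbv Nv; case: (eqVneq a b) => [//|N].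
have [y Hy Hc] := FS H N.
rewrite (@S_fun a y v Hy Sav) in Hc.
have := Cov_R Hbv; by rewrite -(nsub_conn Nv Hc) R_irr.
Qed.

Lemma IN2 v p1 p2 : v \in normW E X r -> Cv p1 v -> Cv p2 v -> p1 != p2 ->
  1 < indeg (Ntil E X r) v.
Proof.
move=> Wv H1 H2 N.
move: (Wv); rewrite inW => /andP [Vv Nv].
have [e1 [T1 D1]] := PE Wv H1.
have [e2 [T2 D2]] := PE Wv H2.
rewrite /indeg; apply/card_gt1P; exists e1, e2; split; [by rewrite inE | by rewrite inE | ].
apply/negP => /eqP E12; subst e2; move: N => /negP; apply; apply/eqP.
case: D1 => [[Ep1 s1]|[s1 [w1 F1 G1]]]; case: D2 => [[Ep2 s2]|[s2 [w2 F2 G2]]].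
- by rewrite -Ep1 -Ep2.
- exfalso; subst e1.
  have Rw : R w2 v.
    by case: (Sch G2) => [->|[_ Rw]]; [exact: Cov_R H2 | exact: R_trans Rw (Cov_R H2)].
  exact: (Cov_short H1 (Cov_R F2) Rw).
- exfalso; subst e1.
  have Rw : R w1 v.
    by case: (Sch G1) => [->|[_ Rw]]; [exact: Cov_R H1 | exact: R_trans Rw (Cov_R H1)].
  exact: (Cov_short H2 (Cov_R F1) Rw).
have S1 : S p1 v by rewrite /= s1 H1.
have S2 : S p2 v by rewrite /= s2 H2.
have G1' : connect S w1 v by apply: (connect_trans G1); apply: connect1.
have G2' : connect S w2 v by apply: (connect_trans G2); apply: connect1.
have Ew := U F1 F2 G1' G2'; subst w2.
case: (FNconn G1 G2) => H; first exact: (chain_end H S1 H2 Nv).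
exact: esym (chain_end H S2 H1 Nv).
Qed.

Lemma sp_conn y q v : all sub (y :: q) -> path Cv y (rcons q v) -> connect S y v.
Proof.
elim: q y => [|z q IH] y /=.
  by move=> /andP [Hs _] /andP [H _]; apply: connect1; rewrite /= Hs H.
move=> /andP [Hy Hq] /andP [Hyz Hp].
apply: (connect_trans (connect1 _) (IH z Hq Hp)); by rewrite /= Hy Hyz.
Qed.

Lemma det w q1 q2 v : sub w -> path Cv w (rcons q1 v) -> path Cv w (rcons q2 v) ->
  all sub q1 -> all sub q2 -> ~~ sub v -> q1 = q2.
Proof.
move=> Hw P1 P2 A1 A2 Nv.
elim: q1 w q2 Hw P1 P2 A1 A2 => [|y1 q1 IH] w [|y2 q2] //= Hw.
- move=> /andP [H1 _] /andP [H2 _] _ /andP [s2 _].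
  have [d [_ Hu]] := sub_chi Hw.
  by rewrite (Hu _ H1) -(Hu _ H2) s2 in Nv.
- move=> /andP [H1 _] /andP [H2 _] /andP [s1 _] _.
  have [d [_ Hu]] := sub_chi Hw.
  by rewrite (Hu _ H2) -(Hu _ H1) s1 in Nv.
move=> /andP [H1 P1] /andP [H2 P2] /andP [s1 A1] /andP [s2 A2].
have [d [_ Hu]] := sub_chi Hw.
have E' : y1 = y2 by rewrite (Hu _ H1) (Hu _ H2).
subst y2; by rewrite (IH y1 q2 s1 P1 P2 A1 A2).
Qed.

Lemma SPU u v q1 q2 : v \in normW E X r -> suppressed_path E X r u q1 v ->
  suppressed_path E X r u q2 v -> q1 = q2.
Proof.
rewrite inW => /andP [_ Nv] /andP [P1 A1] /andP [P2 A2].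
case: q1 P1 A1 => [|y1 q1] /= P1 A1; case: q2 P2 A2 => [|y2 q2] /= P2 A2 //.
- exfalso; move: P1 P2 => /andP [H1 _] /andP [H2 P2].
  have C2 := sp_conn A2 P2.
  have Ev := U H1 H2 (connect0 _ v) C2.
  by move: A2 => /andP [s2 _]; rewrite Ev s2 in Nv.
- exfalso; move: P1 P2 => /andP [H1 P1] /andP [H2 _].
  have C1 := sp_conn A1 P1.
  have Ev := U H2 H1 (connect0 _ v) C1.
  by move: A1 => /andP [s1 _]; rewrite Ev s1 in Nv.
move: P1 P2 => /andP [H1 P1] /andP [H2 P2].
have C1 := sp_conn A1 P1; have C2 := sp_conn A2 P2.
have E' := U H1 H2 C1 C2; subst y2.
move: A1 A2 => /andP [s1 A1] /andP [_ A2].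
by rewrite (det s1 P1 P2 A1 A2 Nv).
Qed.


Lemma CP v : indeg E v = 1 -> vis v -> v != r ->
  exists p, Cv p v /\ forall u, Cv u v -> u = p.
Proof.
move=> Hi Vv Nr.
have [p Hp] := @card1_rel' E v Hi.
have Epv : E p v by rewrite Hp.
have Up : forall q, E q v -> q = p by move=> q; rewrite Hp => /eqP.
have Vp : vis p.
  case: (eqVneq p r) => [->|Npr]; first exact: vis_r.
  have [x [Hx Hw]] := vis_wit Vv Nr.
  apply: (@wit_vis p x); split => // s Hs Hl.
  have [q Hq Hqv] := par_in_path Hs (Hw s Hs Hl) Nr.
  by rewrite -(Up _ Hqv).
have Npv : p != v by apply/negP => /eqP E'; move: (acyc Epv); rewrite E' connect0.
have Rpv : R p v := RI Vp Vv Npv (connect1 Epv).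
have Ret : forall u, R u v -> u = p \/ R u p.
  move=> u /RP [Vu _ Nu Cu]; have [q Hq Cq] := LS Cu Nu; rewrite (Up _ Hq) in Cq.
  by case: (eqVneq u p) => [->|N]; [left | right; apply: (RI Vu Vp N Cq)].
exists p; split.
  apply: (Cov_intro Rpv) => w Hpw Hwv; case: (Ret _ Hwv) => [Ew|H].
    by rewrite Ew R_irr in Hpw.
  by have := R_trans Hpw H; rewrite R_irr.
move=> u Hu; case: (Ret _ (Cov_R Hu)) => [//|H].
by case: (Cov_short Hu H Rpv).
Qed.

Lemma CC v : outdeg E v = 1 -> vis v -> v \notin X -> v != r ->
  exists c, Cv v c /\ forall u, Cv v u -> u = c.
Proof.
move=> Ho Vv NX Nr.
have [c Hc] := @card1_rel E v Ho.
have Evc : E v c by rewrite Hc.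
have Uc : forall d, E v d -> d = c by move=> d; rewrite Hc => /eqP.
have [x [Hx Hw]] := vis_wit Vv Nr.
have Vc : vis c.
  apply: (@wit_vis c x); split => // s Hs Hl.
  have Nvx : v != last r s by rewrite Hl; apply/negP => /eqP E'; rewrite E' Hx in NX.
  have [d Hd Hvd] := chi_in_path Hs (Hw s Hs Hl) Nvx.
  by rewrite -(Uc _ Hvd) inE Hd orbT.
have Nvc : v != c by apply/negP => /eqP E'; move: (acyc Evc); rewrite -E' connect0.
have Rvc : R v c := RI Vv Vc Nvc (connect1 Evc).
have Ret : forall u, R v u -> u = c \/ R c u.
  move=> u /RP [_ Vu Nu Cu]; have [d Hd Cd] := FS Cu Nu; rewrite (Uc _ Hd) in Cd.
  by case: (eqVneq c u) => [->|N]; [left | right; apply: (RI Vc Vu N Cd)].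
exists c; split.
  apply: (Cov_intro Rvc) => w Hvw Hwc; case: (Ret _ Hvw) => [Ew|H].
    by rewrite Ew R_irr in Hwc.
  by have := R_trans H Hwc; rewrite R_irr.
move=> u Hu; case: (Ret _ (Cov_R Hu)) => [//|H].
by case: (Cov_short Hu Rvc H).
Qed.

Lemma out0 v w : outdeg E v = 0 -> Ntil E X r v w = false.
Proof.
move=> H; apply/negP => /Ntil_R /RP [_ _ N C].
have [y Hy _] := FS C N.
by rewrite (@card0_rel E v y H) in Hy.
Qed.

Lemma outN0 v : outdeg E v = 0 -> outdeg (Ntil E X r) v = 0.
Proof.
move=> H; apply/eqP; rewrite /outdeg cards_eq0; apply/eqP/setP => w.
by rewrite !inE (out0 w H).
Qed.

Lemma IN1 v : v \in normW E X r -> v != r -> indeg E v = 1 -> indeg (Ntil E X r) v = 1.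
Proof.
move=> Wv Nr Hi; move: (Wv); rewrite inW => /andP [Vv _].
have [p [_ Hu]] := CP Hi Vv Nr.
have [e He] := EP Wv Nr.
rewrite /indeg; apply/eqP/cards1P; exists e; apply/setP => u; rewrite !inE.
apply/idP/eqP => [H|->//]; exact: (UP Hu H He).
Qed.

Lemma has_out v : vis v -> v != r -> v \notin X -> exists c, Cv v c.
Proof.
move=> Vv Nr NX; have [x Wx] := vis_wit Vv Nr.
have Hx := Wx.1.
have Nvx : v != x by apply/negP => /eqP E'; rewrite E' Hx in NX.
have Rvx : R v x := RI Vv (vis_leaf Hx) Nvx (wit_conn Wx).
by have [c Hc _] := Hasse Rvx; exists c.
Qed.

Lemma lemma2_sec : no_shortcuts (Ntil E X r) /\ network (normW E X r) (Ntil E X r) X r /\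
  (forall u v q1 q2, u \in normW E X r -> v \in normW E X r ->
     suppressed_path E X r u q1 v -> suppressed_path E X r u q2 v -> q1 = q2).
Proof.
have HX : forall v, v \in X <-> [/\ v \in [set: V], v != r, indeg E v = 1 & outdeg E v = 0].
  by case: HN.
split; [|split].
- move=> u v Huv; apply/negP => /existsP [w /existsP [w' /and3P [H1 H2 H3]]].
  have [W' _ _] := Ntil_elim H3.
  move: (W'); rewrite inW => /andP [V' N'].
  have [_ _ [c Hc Cc]] := Ntil_elim Huv.
  have Rww' : w = w' \/ R w w' := conn_sub Ntil_R H2.
  have Ruw' : R u w'.
    by case: Rww' => [<-|H]; [exact: Ntil_R H1 | exact: R_trans (Ntil_R H1) H].
  exact: (B Hc Cc V' N' Ruw' (Ntil_R H3)).
- split.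
  + by move=> u v /Ntil_elim [H1 H2 _]; rewrite H1 H2.
  + move=> u v H; apply/negP => C; case: (conn_sub Ntil_R C) => [E'|H'].
      by subst; have := Ntil_R H; rewrite R_irr.
    by have := R_trans (Ntil_R H) H'; rewrite R_irr.
  + split; first by rewrite inW vis_r rnot_sub.
    apply/eqP; rewrite /indeg cards_eq0; apply/eqP/setP => u; rewrite !inE.
    apply/negP => H; have := Ntil_R H.
    by rewrite (root_conn (R_conn (Ntil_R H))) R_irr.
  + move=> v Wv Nr; move: (Wv); rewrite inW => /andP [Vv Nv].
    have Ht : [\/ indeg E v = 1 /\ outdeg E v = 0, indeg E v = 1 /\ 1 < outdeg E v
      | outdeg E v = 1 /\ 1 < indeg E v].
      by case: HN => _ _ _ Ht _; apply: Ht.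
    case: Ht => [[Hi Ho]|[Hi Ho]|[Ho Hi]].
    * by apply: Or31; split; [exact: IN1 Wv Nr Hi | exact: outN0].
    * apply: Or32; split; first exact: IN1 Wv Nr Hi.
      have NX : v \notin X.
        by apply/negP => /HX [_ _ _ H0]; rewrite H0 in Ho.
      have [p [Hp Up]] := CP Hi Vv Nr.
      have Ci : indeg Cv v = 1.
        rewrite /indeg; apply/eqP/cards1P; exists p; apply/setP => u; rewrite !inE.
        by apply/idP/eqP => [/Up //| ->].
      have [c1 Hc1] := has_out Vv Nr NX.
      have : 1 < outdeg Cv v.
        rewrite ltn_neqAle eq_sym; apply/andP; split.
          by move: Nv; rewrite /subdividing Ci eqxx.
        by rewrite /outdeg card_gt0; apply/set0Pn; exists c1; rewrite inE.
      rewrite /outdeg => /card_gt1P [a1 [a2 [A1 A2 N12]]].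
      rewrite !inE in A1 A2.
      exact: OUT2 Wv A1 A2 N12.
    * have NX : v \notin X.
        by apply/negP => /HX [_ _ H1 _]; rewrite H1 in Hi.
      have [c [Hc Uc]] := CC Ho Vv NX Nr.
      apply: Or33; split.
        have [e [Ve Ne Ce]] := FW (Cov_vis Hc).2.
        have Te : Ntil E X r v e by apply: (Ntil_intro Wv _ Hc Ce); rewrite inW Ve Ne.
        rewrite /outdeg; apply/eqP/cards1P; exists e; apply/setP => u; rewrite !inE.
        by apply/idP/eqP => [H|->//]; exact: (OUTU Uc H Te).
      have Co : outdeg Cv v = 1.
        rewrite /outdeg; apply/eqP/cards1P; exists c; apply/setP => u; rewrite !inE.
        by apply/idP/eqP => [/Uc //| ->].
      have Hrv : R r v by apply: (RI vis_r Vv _ (root_reach v)); rewrite eq_sym.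
      have [d Hd _] := Hasse_dual Hrv.
      have : 1 < indeg Cv v.
        rewrite ltn_neqAle eq_sym; apply/andP; split.
          by move: Nv; rewrite /subdividing Co eqxx andbT.
        by rewrite /indeg card_gt0; apply/set0Pn; exists d; rewrite inE.
      rewrite /indeg => /card_gt1P [a1 [a2 [A1 A2 N12]]].
      rewrite !inE in A1 A2.
      exact: IN2 Wv A1 A2 N12.
  + move=> v; split.
    * move=> Hx; have [_ Nr Hi Ho] := (HX v).1 Hx.
      have Wv : v \in normW E X r by rewrite inW vis_leaf // leaf_nsub.
      by split => //; [exact: IN1 Wv Nr Hi | exact: outN0].
    * move=> [Wv Nr Hi Ho].
      case: (boolP (v \in X)) => // NX; exfalso.
      move: (Wv); rewrite inW => /andP [Vv _].
      have [c Hc] := has_out Vv Nr NX.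
      have [e [Ve Ne Ce]] := FW (Cov_vis Hc).2.
      have Te : Ntil E X r v e by apply: (Ntil_intro Wv _ Hc Ce); rewrite inW Ve Ne.
      by rewrite (@card0_rel (Ntil E X r) v e Ho) in Te.
- by move=> u v q1 q2 _ Wv; apply: SPU.
Qed.

End Pf.

Theorem lemma2 (V : finType) (E : rel V) (X : {set V}) (r : V)
  (HN : network [set: V] E X r) :
  (* (a) *) no_shortcuts (Ntil E X r) /\
  (* (b) *) network (normW E X r) (Ntil E X r) X r /\
  (* (b), simplicity: suppression creates no parallel arcs *)
  (forall u v q1 q2, u \in normW E X r -> v \in normW E X r ->
     suppressed_path E X r u q1 v -> suppressed_path E X r u q2 v -> q1 = q2).
Proof. exact: lemma2_sec HN. Qed.
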